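(* Let $\mathcal{M}_i=(E_i,\rho_i)$, $i=1,2$, be $q$-matroids, $E=E_1\oplus E_2$ with projections $\pi_i:E\to E_i$, $\rho'_i(V)=\rho_i(\pi_i(V))$ for $V\le E$, and let $\rho$ be the rank function of $\mathcal{M}_1\oplus\mathcal{M}_2$. Define $\mathcal{X}=\{X\le E\mid \rho'_1(X)+\rho'_2(X)<\dim X\}$, $\mathcal{T}=\{X_1\oplus X_2\mid X_i\le E_i\}$, and for $V\le E$, $\mathcal{T}(V)=\{X_1\oplus X_2\mid X_i\le\pi_i(V)\}$. Then for every $V\le E$, \[ \rho(V)=\dim V+\min_{X\in\{0\}\cup\{X\in\mathcal{X}: X\le V\}}\big(\rho'_1(X)+\rho'_2(X)-\dim X\big) =\dim V+\min_{X\in\mathcal{T}}\big(\rho'_1(X)+\rho'_2(X)-\dim(X\cap V)\big) =\dim V+\min_{X\in\mathcal{T}(V)}\big(\rho'_1(X)+\rho'_2(X)-\dim(X\cap V)\big). \] As a consequence, $V$ is independent in $\mathcal{M}_1\oplus\mathcal{M}_2$ if and only if no subspace of $V$ lies in $\mathcal{X}$.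
   Context: Let $\mathbb{F}=\mathbb{F}_q$. A $q$-matroid is $\mathcal{M}=(E,\rho)$, $E$ a finite-dimensional $\mathbb{F}$-vector space, $\rho$ from subspaces to $\mathbb{Z}_{\ge0}$ with $0\le\rho(V)\le\dim V$, monotone and submodular; $V$ is independent if $\rho(V)=\dim V$. The direct sum $\mathcal{M}_1\oplus\mathcal{M}_2=(E,\rho)$ on $E=E_1\oplus E_2$ (each $E_i$ identified with its image) is defined by $\rho(V)=\dim V+\min_{X\le V}(\rho_1(\pi_1(X))+\rho_2(\pi_2(X))-\dim X)$. *)

(* Defs.v *)
From HB Require Import structures.
From mathcomp Require Import all_boot all_order all_algebra.
Set Implicit Arguments. Unset Strict Implicit. Unset Printing Implicit Defensive.
Import Order.TTheory GRing.Theory Num.Theory.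
Local Open Scope ring_scope.

(* Over a finite field, the subspaces of a finite-dimensional space form a
   finite type (subType of the finite matrix type). *)
Module FinVspace.
Import VectorInternalTheory.
HB.instance Definition _ (F : finFieldType) (vT : vectType F) :=
  [Finite of {vspace vT} by <:].
End FinVspace.
Export FinVspace.

Section QMatroid.
Variables (F : finFieldType) (vT : vectType F).

(* rank function axioms of a q-matroid (nonnegativity is automatic in nat) *)
Definition qmatroid (rho : {vspace vT} -> nat) : Prop :=
  [/\ forall V : {vspace vT}, (rho V <= \dim V)%N,
      forall V W : {vspace vT}, (V <= W)%VS -> (rho V <= rho W)%N &
      forall V W : {vspace vT}, (rho (V + W)%VS + rho (V :&: W)%VS <= rho V + rho W)%N].
End QMatroid.

(* minimum of f over {X | P X}; i0 is a witness of P (meaningful when P i0) *)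
Definition minover (T : finType) (i0 : T) (P : pred T) (f : T -> int) : int :=
  f (Order.arg_min i0 P f).

Section DirectSum.
Variables (F : finFieldType) (E1 E2 : vectType F).

Definition pi1 : 'Hom((E1 * E2)%type, E1) := linfun (fun x : E1 * E2 => x.1).
Definition pi2 : 'Hom((E1 * E2)%type, E2) := linfun (fun x : E1 * E2 => x.2).
Definition in1 : 'Hom(E1, (E1 * E2)%type) := linfun (fun x : E1 => (x, 0 : E2)).
Definition in2 : 'Hom(E2, (E1 * E2)%type) := linfun (fun x : E2 => (0 : E1, x)).

Variables (rho1 : {vspace E1} -> nat) (rho2 : {vspace E2} -> nat).

Definition rho1' (V : {vspace E1 * E2}) : nat := rho1 (pi1 @: V)%VS.
Definition rho2' (V : {vspace E1 * E2}) : nat := rho2 (pi2 @: V)%VS.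

Definition dsum_rank (V : {vspace E1 * E2}) : int :=
  (\dim V)%:Z + minover 0%VS (fun X => (X <= V)%VS)
      (fun X => (rho1' X + rho2' X)%:Z - (\dim X)%:Z).

Definition dsum_indep (V : {vspace E1 * E2}) : Prop := dsum_rank V = (\dim V)%:Z.

Definition calX : pred {vspace E1 * E2} :=
  fun X => (rho1' X + rho2' X < \dim X)%N.

Definition dsumv (X1 : {vspace E1}) (X2 : {vspace E2}) : {vspace E1 * E2} :=
  (in1 @: X1 + in2 @: X2)%VS.

Definition calT : pred {vspace E1 * E2} :=
  fun X => [exists X1 : {vspace E1}, exists X2 : {vspace E2}, X == dsumv X1 X2].

Definition calTV (V : {vspace E1 * E2}) : pred {vspace E1 * E2} :=
  fun X => [exists X1 : {vspace E1}, exists X2 : {vspace E2},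
    [&& (X1 <= pi1 @: V)%VS, (X2 <= pi2 @: V)%VS & X == dsumv X1 X2]].

End DirectSum.

(* Main.v *)
Require Import Defs.
From HB Require Import structures.
From mathcomp Require Import all_boot all_order all_algebra.
Import Order.TTheory GRing.Theory Num.Theory.
Local Open Scope ring_scope.

Section M.
Variables (T : finType) (i0 : T) (P : pred T) (f : T -> int).
Lemma minover_le j : P i0 -> P j -> minover i0 P f <= f j.
Proof. by move=> Pi0 Pj; rewrite /minover; case: arg_minP => // i _; apply. Qed.
Lemma minover_mem : P i0 -> exists2 j, P j & minover i0 P f = f j.
Proof. by move=> Pi0; rewrite /minover; case: arg_minP => // i Pi _; exists i. Qed.
End M.

Lemma minover_eq (T : finType) (i0 j0 : T) (P Q : pred T) (f g : T -> int) :
  P i0 -> Q j0 -> (forall i, P i -> exists2 j, Q j & g j <= f i) ->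
  (forall j, Q j -> exists2 i, P i & f i <= g j) ->
  minover i0 P f = minover j0 Q g.
Proof.
move=> Pi0 Qj0 H1 H2; apply/le_anti/andP; split.
  have [j Qj ->] := minover_mem _ _ _ g Qj0.
  have [i Pi le] := H2 j Qj; exact: le_trans (minover_le _ _ _ f _ Pi0 Pi) le.
have [i Pi ->] := minover_mem _ _ _ f Pi0.
have [j Qj le] := H1 i Pi; exact: le_trans (minover_le _ _ _ g _ Qj0 Qj) le.
Qed.

Section DS.
Variables (F : finFieldType) (E1 E2 : vectType F).
Local Notation p1 := (pi1 E1 E2). Local Notation p2 := (pi2 E1 E2).
Local Notation i1 := (in1 E1 E2). Local Notation i2 := (in2 E1 E2).

Definition f1 (x : E1) : (E1 * E2)%type := (x, 0).
Definition f2 (x : E2) : (E1 * E2)%type := (0, x).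
Fact f1_lin : linear f1.
Proof. move=> a x y; rewrite /f1; congr pair => /=; by rewrite ?scaler0 ?addr0. Qed.
Fact f2_lin : linear f2.
Proof. move=> a x y; rewrite /f2; congr pair => /=; by rewrite ?scaler0 ?addr0. Qed.
HB.instance Definition _ := GRing.isLinear.Build F E1 (E1 * E2)%type *:%R f1 f1_lin.
HB.instance Definition _ := GRing.isLinear.Build F E2 (E1 * E2)%type *:%R f2 f2_lin.
Lemma in1E a : i1 a = (a, 0). Proof. exact: (lfunE f1 a). Qed.
Lemma in2E a : i2 a = (0, a). Proof. exact: (lfunE f2 a). Qed.
Lemma pi1E a : p1 a = a.1. Proof. by rewrite /pi1 lfunE. Qed.
Lemma pi2E a : p2 a = a.2. Proof. by rewrite /pi2 lfunE. Qed.

Lemma pi1_dsum (A : {vspace E1}) (B : {vspace E2}) : (p1 @: dsumv A B <= A)%VS.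
Proof.
rewrite /dsumv limgD; apply/subvP => w /memv_addP[x /memv_imgP[u /memv_imgP[a Aa ->] ->]].
move=> [y /memv_imgP[u' /memv_imgP[b Bb ->] ->] ->].
by rewrite !pi1E !in1E !in2E /= addr0.
Qed.

Lemma pi2_dsum (A : {vspace E1}) (B : {vspace E2}) : (p2 @: dsumv A B <= B)%VS.
Proof.
rewrite /dsumv limgD; apply/subvP => w /memv_addP[x /memv_imgP[u /memv_imgP[a Aa ->] ->]].
move=> [y /memv_imgP[u' /memv_imgP[b Bb ->] ->] ->].
by rewrite !pi2E !in1E !in2E /= add0r.
Qed.

Lemma sub_dsum (Y : {vspace E1 * E2}) : (Y <= dsumv (p1 @: Y) (p2 @: Y))%VS.
Proof.
apply/subvP => y Yy.
have -> : y = i1 (p1 y) + i2 (p2 y).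
  by rewrite pi1E pi2E in1E in2E; case: y {Yy} => a b; congr (_, _); rewrite /= ?addr0 ?add0r.
by apply: memv_add; apply: memv_img; apply: memv_img.
Qed.

Lemma dsum00 : dsumv (0%VS : {vspace E1}) (0%VS : {vspace E2}) = 0%VS.
Proof. by rewrite /dsumv !limg0 addv0. Qed.
End DS.
Arguments pi1_dsum {F E1 E2}. Arguments pi2_dsum {F E1 E2}. Arguments sub_dsum {F E1 E2}. Arguments dsum00 {F E1 E2}.

From mathcomp Require Import zify.

Theorem proposition5p4 (F : finFieldType) (E1 E2 : vectType F)
    (rho1 : {vspace E1} -> nat) (rho2 : {vspace E2} -> nat)
    (hM1 : qmatroid rho1) (hM2 : qmatroid rho2) :
  (forall V : {vspace E1 * E2},
    [/\ dsum_rank rho1 rho2 V =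
          (\dim V)%:Z + minover 0%VS
            (fun X => (X == 0%VS) || (calX rho1 rho2 X && (X <= V)%VS))
            (fun X => (rho1' rho1 X + rho2' rho2 X)%:Z - (\dim X)%:Z),
        dsum_rank rho1 rho2 V =
          (\dim V)%:Z + minover 0%VS (calT (E1:=E1) (E2:=E2))
            (fun X => (rho1' rho1 X + rho2' rho2 X)%:Z - (\dim (X :&: V))%:Z) &
        dsum_rank rho1 rho2 V =
          (\dim V)%:Z + minover 0%VS (calTV V)
            (fun X => (rho1' rho1 X + rho2' rho2 X)%:Z - (\dim (X :&: V))%:Z)])
  /\
  (forall V : {vspace E1 * E2},
    dsum_indep rho1 rho2 V <->
    ~ (exists X : {vspace E1 * E2}, (X <= V)%VS /\ calX rho1 rho2 X)).
Proof.
have [r1le r1mon _] := hM1; have [r2le r2mon _] := hM2.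
have r10 : rho1' rho1 (0%VS : {vspace E1 * E2}) = 0%N.
  by have := r1le 0%VS; rewrite dimv0 leqn0 => /eqP; rewrite /rho1' limg0.
have r20 : rho2' rho2 (0%VS : {vspace E1 * E2}) = 0%N.
  by have := r2le 0%VS; rewrite dimv0 leqn0 => /eqP; rewrite /rho2' limg0.
have m1 : forall X Y : {vspace E1 * E2}, (X <= Y)%VS -> (rho1' rho1 X <= rho1' rho1 Y)%N.
  by move=> X Y XY; apply: r1mon; apply: limgS.
have m2 : forall X Y : {vspace E1 * E2}, (X <= Y)%VS -> (rho2' rho2 X <= rho2' rho2 Y)%N.
  by move=> X Y XY; apply: r2mon; apply: limgS.
have TV_T : forall V (Y : {vspace E1 * E2}), (Y <= V)%VS ->
    calTV V (dsumv (pi1 E1 E2 @: Y) (pi2 E1 E2 @: Y)).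
  move=> V Y YV; rewrite /calTV; apply/existsP; exists (pi1 E1 E2 @: Y)%VS; apply/existsP.
  by exists (pi2 E1 E2 @: Y)%VS; rewrite !limgS //=.
have TV_T' : forall V X : {vspace E1 * E2}, calTV V X -> calT X.
  move=> V X; rewrite /calTV /calT => /existsP[X1 /existsP[X2 /and3P[_ _ /eqP->]]].
  by apply/existsP; exists X1; apply/existsP; exists X2.
have Tgen : forall V (Q : pred {vspace E1 * E2}), Q 0%VS ->
   (forall X, Q X -> calT X) ->
   (forall Y, (Y <= V)%VS -> Q (dsumv (pi1 E1 E2 @: Y) (pi2 E1 E2 @: Y))) ->
   dsum_rank rho1 rho2 V = (\dim V)%:Z + minover 0%VS Q
     (fun X => (rho1' rho1 X + rho2' rho2 X)%:Z - (\dim (X :&: V))%:Z).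
  move=> V Q Q0 QT QY; rewrite /dsum_rank; congr (_ + _).
  apply: minover_eq; first exact: sub0v.
  - exact: Q0.
  - move=> Y YV; exists (dsumv (pi1 E1 E2 @: Y) (pi2 E1 E2 @: Y)); first exact: QY.
    have h1 := r1mon _ _ (pi1_dsum (pi1 E1 E2 @: Y) (pi2 E1 E2 @: Y)).
    have h2 := r2mon _ _ (pi2_dsum (pi1 E1 E2 @: Y) (pi2 E1 E2 @: Y)).
    have h3 : (\dim Y <= \dim (dsumv (pi1 E1 E2 @: Y) (pi2 E1 E2 @: Y) :&: V))%N.
      by apply: dimvS; rewrite subv_cap sub_dsum YV.
    move: h1 h2 h3; rewrite /rho1' /rho2'; lia.
  - move=> X QX; exists (X :&: V)%VS; first exact: capvSr.
    have h1 := m1 _ _ (capvSl X V); have h2 := m2 _ _ (capvSl X V).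
    move: h1 h2; lia.
have g0 : forall X : {vspace E1 * E2}, ~~ calX rho1 rho2 X ->
    0 <= (rho1' rho1 X + rho2' rho2 X)%:Z - (\dim X)%:Z.
  by move=> X; rewrite /calX -leqNgt; lia.
split.
  move=> V; split.
  - rewrite /dsum_rank; congr (_ + _); apply: minover_eq; first exact: sub0v.
    + by rewrite eqxx.
    + move=> Y YV; case cY: (calX rho1 rho2 Y).
        by exists Y; rewrite ?cY ?YV ?orbT.
      exists 0%VS; first by rewrite eqxx.
      by rewrite r10 r20 dimv0 subrr; apply: g0; rewrite cY.
    + move=> X /orP[/eqP-> | /andP[_ XV]]; last by exists X.
      by exists 0%VS; rewrite ?sub0v.
  - apply: Tgen => //; last by move=> Y YV; apply/existsP; exists (pi1 E1 E2 @: Y)%VS; apply/existsP; exists (pi2 E1 E2 @: Y)%VS.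
    by apply/existsP; exists 0%VS; apply/existsP; exists 0%VS; rewrite dsum00.
  - apply: Tgen; last exact: TV_T.
      by rewrite /calTV; apply/existsP; exists 0%VS; apply/existsP; exists 0%VS; rewrite !sub0v dsum00 eqxx.
    exact: TV_T'.
move=> V; rewrite /dsum_indep /dsum_rank.
set g := (fun X : {vspace E1 * E2} => (rho1' rho1 X + rho2' rho2 X)%:Z - (\dim X)%:Z).
have P0 : (0 <= V)%VS by exact: sub0v.
have mle : minover 0%VS (fun X => (X <= V)%VS) g <= 0.
  have g00 : g 0%VS = 0 by rewrite /g /= r10 r20 dimv0 subrr.
  by rewrite -g00; exact: minover_le.
split.
  move=> E [X [XV cX]].
  have m0 : minover 0%VS (fun X => (X <= V)%VS) g = 0.
    by move: E => /eqP; rewrite -{2}(addr0 (\dim V)%:Z) (inj_eq (addrI _)) => /eqP.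
  have := minover_le _ 0%VS (fun X => (X <= V)%VS) g X P0 XV; rewrite m0 /g /=.
  by move: cX; rewrite /calX; lia.
move=> H; have [j Pj mj] := minover_mem _ 0%VS (fun X => (X <= V)%VS) g P0.
have gj : 0 <= g j by apply: g0; apply/negP => cj; apply: H; exists j.
have gj' : g j <= 0 by rewrite -mj.
by rewrite mj (_ : g j = 0) ?addr0 //; apply/le_anti; rewrite gj gj'.
Qed.
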